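(* Let $M$ be a duplicial module in a pre-additive category. For all $n\ge0$, $$\pi_n=\kappa_n^n-b_{n+1}\kappa_{n+1}^n d_n .$$
   Context: Let $\mathcal A$ be a pre-additive category. Let $\Lambda_+$ be the category with objects $[n]$, $n\ge0$, where $\Lambda_+([m],[n])$ is the set of weakly monotone $f:\mathbb Z\to\mathbb Z$ with $f(j+m+1)=f(j)+n+1$ for all $j$ and $f(0)\ge0$. Define $\varepsilon^n_i:[n-1]\to[n]$ ($n\ge1$, $0\le i\le n$) by $\varepsilon^n_i(j)=j$ for $0\le j<i$, $j+1$ for $i\le j\le n-1$, and $\eta^n_i:[n+1]\to[n]$ ($0\le i\le n+1$) by $\eta^n_i(j)=j$ for $0\le j\le i$, $j-1$ for $i<j\le n+1$. A duplicial module is a functor $M:\Lambda_+^{op}\to\mathcal A$; $M_n=M([n])$, $\partial_{n,i}=M(\varepsilon^n_i):M_n\to M_{n-1}$, $s_{n,i}=M(\eta^n_i):M_n\to M_{n+1}$. Convention $M_{-1}=0$, maps into/out of it zero. Define $b_n=\sum_{i=0}^n(-1)^i\partial_{n,i}$ ($b_0=0$), $d_n=\sum_{i=0}^{n+1}(-1)^is_{n,i}$, the Karoubi operator $\kappa_n=(-1)^n(\partial_{n+1,0}s_{n,n+1}-s_{n-1,n}\partial_{n,0})$ (so $\kappa_0=\partial_{1,0}s_{0,1}$), and the Dwyer–Kan operator $\pi_n=(-1)^n\partial_{n+1,0}\kappa_{n+1}^n s_{n,n+1}:M_n\to M_n$. *)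

(* Defs.v *)
From HB Require Import structures.
From mathcomp Require Import all_boot all_order all_algebra.
From Stdlib Require Import ZArith Lia.

Set Implicit Arguments.
Unset Strict Implicit.
Unset Printing Implicit Defensive.

Import GRing.Theory.

(* Pre-additive categories: hom-sets are abelian groups and composition
   is biadditive.  [mcomp g f] is "g after f".                          *)
Record preadditive := PreAdditive {
  Ob : Type;
  Hom : Ob -> Ob -> zmodType;
  mcomp : forall a b c : Ob, Hom b c -> Hom a b -> Hom a c;
  idm : forall a : Ob, Hom a a;
  compA : forall a b c d (h : Hom c d) (g : Hom b c) (f : Hom a b),
      mcomp h (mcomp g f) = mcomp (mcomp h g) f;
  comp1m : forall a b (f : Hom a b), mcomp (idm b) f = f;
  compm1 : forall a b (f : Hom a b), mcomp f (idm a) = f;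
  compDl : forall a b c (g1 g2 : Hom b c) (f : Hom a b),
      mcomp (g1 + g2)%R f = (mcomp g1 f + mcomp g2 f)%R;
  compDr : forall a b c (g : Hom b c) (f1 f2 : Hom a b),
      mcomp g (f1 + f2)%R = (mcomp g f1 + mcomp g f2)%R
}.
Arguments mcomp {p a b c}.
Arguments idm {p a}.
Arguments Hom : clear implicits.

(* The category Lambda_+ : objects [n], n : nat; morphisms [m] -> [n] are
   weakly monotone f : Z -> Z with f (j+m+1) = f j + n + 1 and f 0 >= 0. *)
Definition is_lam (m n : nat) (f : Z -> Z) : Prop :=
  (forall j k : Z, (j <= k)%Z -> (f j <= f k)%Z) /\
  (forall j : Z, f (j + Z.of_nat m + 1)%Z = (f j + Z.of_nat n + 1)%Z) /\
  (0 <= f 0%Z)%Z.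

Record lam_hom (m n : nat) := LamHom {
  lam_fun :> Z -> Z;
  lam_prop : is_lam m n lam_fun
}.

Lemma lam_id_prop n : is_lam n n (fun j => j).
Proof. split; [|split]; intros; lia. Qed.

Definition lam_id n : lam_hom n n := LamHom (lam_id_prop n).

Lemma lam_comp_prop m n p (g : lam_hom n p) (f : lam_hom m n) :
  is_lam m p (fun j => g (f j)).
Proof.
case: g => g [gm [gp g0]]; case: f => f [fm [fp f0]] /=.
split; [|split].
- by move=> j k Hjk; apply: gm; apply: fm.
- by move=> j; rewrite fp gp.
- by apply: Z.le_trans g0 (gm _ _ f0).
Qed.

Definition lam_comp m n p (g : lam_hom n p) (f : lam_hom m n) : lam_hom m p :=
  LamHom (lam_comp_prop g f).

(* epsilon^{k+1}_i : [k] -> [k+1], 0 <= i <= k+1.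
   On 0..k it is j |-> j (j < i), j+1 (j >= i); extended periodically:
   eps(j) = j + 1 + floor((j - i)/(k+1)). *)
Definition eps_fun (k : nat) (i : nat) (j : Z) : Z :=
  (j + 1 + (j - Z.of_nat i) / (Z.of_nat k + 1))%Z.

Lemma eps_prop k (i : 'I_k.+2) : is_lam k k.+1 (eps_fun k i).
Proof.
have /ltP Hi := ltn_ord i.
rewrite /eps_fun; set N := (Z.of_nat k + 1)%Z.
have HN : (0 < N)%Z by rewrite /N; lia.
split; [|split].
- move=> j j' Hj.
  have := Z.div_le_mono (j - Z.of_nat i) (j' - Z.of_nat i) N HN ltac:(lia); lia.
- move=> j.
  have -> : (j + Z.of_nat k + 1 - Z.of_nat i = (j - Z.of_nat i) + 1 * N)%Z
    by rewrite /N; lia.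
  rewrite Z.div_add; last by lia.
  rewrite /N; lia.
- have : (-1 <= (0 - Z.of_nat i) / N)%Z.
    by apply: Z.div_le_lower_bound => //; rewrite /N; lia.
  lia.
Qed.

Definition eps (k : nat) (i : 'I_k.+2) : lam_hom k k.+1 := LamHom (eps_prop i).

(* eta^k_i : [k+1] -> [k], 0 <= i <= k+1.
   On 0..k+1 it is j |-> j (j <= i), j-1 (j > i); extended periodically:
   eta(j) = j - 1 - floor((j - i - 1)/(k+2)). *)
Definition eta_fun (k : nat) (i : nat) (j : Z) : Z :=
  (j - 1 - (j - Z.of_nat i - 1) / (Z.of_nat k + 2))%Z.

Lemma eta_prop k (i : 'I_k.+2) : is_lam k.+1 k (eta_fun k i).
Proof.
have /ltP Hi := ltn_ord i.
rewrite /eta_fun; set P := (Z.of_nat k + 2)%Z.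
have HP : (0 < P)%Z by rewrite /P; lia.
split; [|split].
- move=> j j' Hj.
  set a := (j - Z.of_nat i - 1)%Z; set b := (j' - Z.of_nat i - 1)%Z.
  have H1 : (b / P <= (a + (j' - j) * P) / P)%Z.
    by apply: Z.div_le_mono => //; rewrite /a /b; nia.
  rewrite Z.div_add in H1; last by lia.
  lia.
- move=> j.
  have -> : (j + Z.of_nat k.+1 + 1 - Z.of_nat i - 1
             = (j - Z.of_nat i - 1) + 1 * P)%Z by rewrite /P; lia.
  rewrite Z.div_add; last by lia.
  rewrite /P; lia.
- have : ((0 - Z.of_nat i - 1) / P < 0)%Z.
    by apply: Z.div_lt_upper_bound => //; lia.
  lia.
Qed.

Definition eta (k : nat) (i : 'I_k.+2) : lam_hom k.+1 k := LamHom (eta_prop i).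

(* Duplicial modules: functors Lambda_+^op -> A. *)
Record duplicial (A : preadditive) := Duplicial {
  Mob : nat -> Ob A;
  Mmor : forall m n : nat, lam_hom m n -> Hom A (Mob n) (Mob m);
  Mmor_id : forall n, Mmor (lam_id n) = idm;
  Mmor_comp : forall m n p (g : lam_hom n p) (f : lam_hom m n),
      Mmor (lam_comp g f) = mcomp (Mmor f) (Mmor g)
}.

Section Operators.
Variables (A : preadditive) (M : duplicial A).
Local Open Scope ring_scope.

Local Notation "M_[ n ]" := (Mob M n) (format "M_[ n ]").

Definition sgn {a b : Ob A} (i : nat) (x : Hom A a b) : Hom A a b :=
  x *~ ((-1) ^+ i).

(* del k i = partial_{k+1,i} : M_{k+1} -> M_k,  0 <= i <= k+1 *)
Definition del (k : nat) (i : 'I_k.+2) : Hom A M_[ k.+1 ] M_[ k ] :=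
  Mmor M (eps i).

Definition sdeg (k : nat) (i : 'I_k.+2) : Hom A M_[ k ] M_[ k.+1 ] :=
  Mmor M (eta i).

(* bnd k = b_{k+1} : M_{k+1} -> M_k *)
Definition bnd (k : nat) : Hom A M_[ k.+1 ] M_[ k ] :=
  \sum_(i < k.+2) sgn i (del i).

Definition dd (n : nat) : Hom A M_[ n ] M_[ n.+1 ] :=
  \sum_(i < n.+2) sgn i (sdeg i).

(* Karoubi operator kappa_n : M_n -> M_n (with M_{-1} = 0) *)
Definition kappa (n : nat) : Hom A M_[ n ] M_[ n ] :=
  match n with
  | 0 => mcomp (del (k:=0) ord0) (sdeg (k:=0) ord_max)
  | k.+1 => sgn k.+1 (mcomp (del (k:=k.+1) ord0) (sdeg (k:=k.+1) ord_max)
                      - mcomp (sdeg (k:=k) ord_max) (del (k:=k) ord0))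
  end.

Definition kappa_pow (n j : nat) : Hom A M_[ n ] M_[ n ] :=
  ssrnat.iter j (mcomp (kappa n)) idm.

Definition dk_pi (n : nat) : Hom A M_[ n ] M_[ n ] :=
  sgn n (mcomp (del (k:=n) ord0) (mcomp (kappa_pow n.+1 n) (sdeg (k:=n) ord_max))).

End Operators.

(* Main.v *)
Require Import Defs.
From mathcomp Require Import all_boot all_order all_algebra.
From mathcomp Require Import zify.
From Stdlib Require Import ZArith Lia ProofIrrelevance FunctionalExtensionality.
Import GRing.Theory.
Set Implicit Arguments.
Unset Strict Implicit.
Arguments eps_fun : simpl never.
Arguments eta_fun : simpl never.


Lemma lam_period m n (f : lam_hom m n) (j : Z) (q : nat) :
  f (j + Z.of_nat q * (Z.of_nat m + 1))%Z = (f j + Z.of_nat q * (Z.of_nat n + 1))%Z.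
Proof.
case: f => f [_ [fp _]] /=.
elim: q => [|q IH]; first by rewrite /= !Z.add_0_r.
have -> : (j + Z.of_nat q.+1 * (Z.of_nat m + 1) = (j + Z.of_nat q * (Z.of_nat m + 1)) + Z.of_nat m + 1)%Z by lia.
rewrite fp IH; lia.
Qed.

Lemma lam_ext m n (f g : lam_hom m n) :
  (forall j, (0 <= j <= Z.of_nat m)%Z -> f j = g j) -> f = g.
Proof.
move=> H.
have E : forall j, f j = g j.
  move=> j.
  have HN : (0 < Z.of_nat m + 1)%Z by lia.
  set N := (Z.of_nat m + 1)%Z in HN.
  have Hr := Z.mod_pos_bound j N HN.
  have Hd := Z.div_mod j N ltac:(lia).
  set q := (j / N)%Z in Hd. set r := (j mod N)%Z in Hr Hd.
  have Hrr : (0 <= r <= Z.of_nat m)%Z by rewrite /N in Hr; lia.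
  case: (Z_le_gt_dec 0 q) => Hq.
  - have -> : j = (r + Z.of_nat (Z.to_nat q) * N)%Z by rewrite Z2Nat.id //; lia.
    by rewrite /N !lam_period H.
  - have Ej : r = (j + Z.of_nat (Z.to_nat (- q)) * N)%Z by rewrite Z2Nat.id; lia.
    have Ef := lam_period f j (Z.to_nat (-q)).
    have Eg := lam_period g j (Z.to_nat (-q)).
    rewrite -/N -Ej H // in Ef. rewrite -/N -Ej in Eg. lia.
have Ef : lam_fun f = lam_fun g by apply: functional_extensionality.
case: f g Ef {H E} => f pf [g pg] /= Ef; subst g.
by rewrite (proof_irrelevance _ pf pg).
Qed.

Lemma eps_val k (i : nat) j q :
  (q * (Z.of_nat k + 1) <= j - Z.of_nat i < q * (Z.of_nat k + 1) + Z.of_nat k + 1)%Z ->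
  eps_fun k i j = (j + 1 + q)%Z.
Proof.
move=> H; rewrite /eps_fun.
rewrite (Z.div_unique (j - Z.of_nat i) (Z.of_nat k + 1) q (j - Z.of_nat i - q * (Z.of_nat k + 1))) //; lia.
Qed.

Lemma eta_val k (i : nat) j q :
  (q * (Z.of_nat k + 2) <= j - Z.of_nat i - 1 < q * (Z.of_nat k + 2) + Z.of_nat k + 2)%Z ->
  eta_fun k i j = (j - 1 - q)%Z.
Proof.
move=> H; rewrite /eta_fun.
rewrite (Z.div_unique (j - Z.of_nat i - 1) (Z.of_nat k + 2) q (j - Z.of_nat i - 1 - q * (Z.of_nat k + 2))) //; lia.
Qed.

Ltac tryq_eps k i x := first
  [ (rewrite (@eps_val k i x 0); [|lia]) | (rewrite (@eps_val k i x (-1)); [|lia])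
  | (rewrite (@eps_val k i x 1); [|lia]) | (rewrite (@eps_val k i x 2); [|lia])
  | (rewrite (@eps_val k i x (-2)); [|lia]) ].
Ltac tryq_eta k i x := first
  [ (rewrite (@eta_val k i x 0); [|lia]) | (rewrite (@eta_val k i x (-1)); [|lia])
  | (rewrite (@eta_val k i x 1); [|lia]) | (rewrite (@eta_val k i x 2); [|lia])
  | (rewrite (@eta_val k i x (-2)); [|lia]) ].
Ltac ev_step := match goal with
 | |- context [eps_fun ?k ?i ?x] => tryq_eps k i x
 | |- context [eta_fun ?k ?i ?x] => tryq_eta k i x end.
Ltac noev x := lazymatch x with
  | context [eps_fun _ _ _] => fail | context [eta_fun _ _ _] => fail | _ => idtac end.
Ltac ev_split := match goal with
 | |- context [eps_fun ?k ?i ?x] => noev x;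
   let N := constr:((Z.of_nat k + 1)%Z) in
   destruct (Z_lt_le_dec (x - Z.of_nat i) 0);
   [ destruct (Z_lt_le_dec (x - Z.of_nat i) (- N))
   | destruct (Z_lt_le_dec (x - Z.of_nat i) N) ]
 | |- context [eta_fun ?k ?i ?x] => noev x;
   let N := constr:((Z.of_nat k + 2)%Z) in
   destruct (Z_lt_le_dec (x - Z.of_nat i - 1) 0);
   [ destruct (Z_lt_le_dec (x - Z.of_nat i - 1) (- N))
   | destruct (Z_lt_le_dec (x - Z.of_nat i - 1) N) ]
 end.
Ltac solve_pt0 := repeat ev_step; lia.
Ltac solve_pt1 := repeat ev_step; first [lia | ev_split; solve_pt0].
Ltac solve_pt2 := repeat ev_step; first [lia | ev_split; solve_pt1].
Ltac solve_pt3 := repeat ev_step; first [lia | ev_split; solve_pt2].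
Ltac solve_pt := solve_pt3.

Section Rel.
Variables (A : preadditive) (M : duplicial A).

Ltac mapeq := rewrite /del /sdeg -?(Mmor_comp M) -?(Mmor_id M); congr (Mmor M _);
  apply: lam_ext => j Hj /=; solve_pt.

Lemma F1t k (a b : 'I_k.+3) : 1 <= a -> nat_of_ord b = a.+1 ->
  mcomp (del M a) (mcomp (del M (k:=k.+2) ord0) (sdeg M (k:=k.+2) ord_max)) =
  mcomp (mcomp (del M (k:=k.+1) ord0) (sdeg M (k:=k.+1) ord_max)) (del M b).
Proof. move: (ltn_ord a) (ltn_ord b) => la lb Ha Hb. mapeq. Qed.

Lemma F1r k (a b : 'I_k.+3) : 1 <= a -> nat_of_ord b = a.+1 ->
  mcomp (del M a) (mcomp (sdeg M (k:=k.+1) ord_max) (del M (k:=k.+1) ord0)) =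
  mcomp (mcomp (sdeg M (k:=k) ord_max) (del M (k:=k) ord0)) (del M b).
Proof. move: (ltn_ord a) (ltn_ord b) => la lb Ha Hb. mapeq. Qed.

Lemma F0m n :
  mcomp (del M (k:=n) ord_max) (mcomp (del M (k:=n.+1) ord0) (sdeg M (k:=n.+1) ord_max)) =
  mcomp (del M (k:=n) ord_max) (mcomp (sdeg M (k:=n) ord_max) (del M (k:=n) ord0)).
Proof. mapeq. Qed.

Lemma D1t k (c b : 'I_k.+3) : 1 <= c -> c <= k.+1 -> nat_of_ord c = b.+1 ->
  mcomp (mcomp (del M (k:=k.+2) ord0) (sdeg M (k:=k.+2) ord_max)) (sdeg M (k:=k.+1) c) =
  mcomp (sdeg M (k:=k.+1) b) (mcomp (del M (k:=k.+1) ord0) (sdeg M (k:=k.+1) ord_max)).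
Proof. move: (ltn_ord c) (ltn_ord b) => la lb Ha Hc Hb. mapeq. Qed.

Lemma D1r k (c b : 'I_k.+3) : 1 <= c -> c <= k.+1 -> nat_of_ord c = b.+1 ->
  mcomp (mcomp (sdeg M (k:=k.+1) ord_max) (del M (k:=k.+1) ord0)) (sdeg M (k:=k.+1) c) =
  mcomp (sdeg M (k:=k.+1) b) (mcomp (sdeg M (k:=k) ord_max) (del M (k:=k) ord0)).
Proof. move: (ltn_ord c) (ltn_ord b) => la lb Ha Hc Hb. mapeq. Qed.

Lemma D0m n :
  mcomp (mcomp (del M (k:=n.+1) ord0) (sdeg M (k:=n.+1) ord_max)) (sdeg M (k:=n) ord0) =
  mcomp (mcomp (sdeg M (k:=n) ord_max) (del M (k:=n) ord0)) (sdeg M (k:=n) ord0).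
Proof. mapeq. Qed.

Lemma I1m n : mcomp (del M (k:=n) ord0) (sdeg M (k:=n) ord0) = idm.
Proof. mapeq. Qed.

Lemma I2m n (o : 'I_n.+2) : nat_of_ord o = 1%nat ->
  mcomp (del M (k:=n) o) (sdeg M (k:=n) ord0) = idm.
Proof. move=> Ho. mapeq. Qed.

Lemma I3m n : mcomp (del M (k:=n) ord_max) (sdeg M (k:=n) ord_max) = idm.
Proof. mapeq. Qed.

End Rel.

Local Open Scope ring_scope.

Section Alg.
Variables (A : preadditive) (M : duplicial A).
Arguments sgn : simpl never.
Arguments del : simpl never.
Arguments sdeg : simpl never.
Arguments kappa : simpl never.
Arguments kappa_pow : simpl never.

Lemma mcomp0r a b c (g : Defs.Hom A b c) : mcomp g (0 : Defs.Hom A a b) = 0.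
Proof.
have H := compDr g (0 : Defs.Hom A a b) 0; rewrite addr0 in H.
by apply: (addrI (mcomp g 0)); rewrite -H addr0.
Qed.
Lemma mcomp0l a b c (f : Defs.Hom A a b) : mcomp (0 : Defs.Hom A b c) f = 0.
Proof.
have H := compDl (0 : Defs.Hom A b c) 0 f; rewrite addr0 in H.
by apply: (addrI (mcomp 0 f)); rewrite -H addr0.
Qed.
Lemma mcompNr a b c (g : Defs.Hom A b c) (f : Defs.Hom A a b) : mcomp g (- f) = - mcomp g f.
Proof. by apply: (addrI (mcomp g f)); rewrite -compDr !subrr mcomp0r. Qed.
Lemma mcompNl a b c (g : Defs.Hom A b c) (f : Defs.Hom A a b) : mcomp (- g) f = - mcomp g f.
Proof. by apply: (addrI (mcomp g f)); rewrite -compDl !subrr mcomp0l. Qed.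
Lemma mcompBr a b c (g : Defs.Hom A b c) (f1 f2 : Defs.Hom A a b) :
  mcomp g (f1 - f2) = mcomp g f1 - mcomp g f2.
Proof. by rewrite compDr mcompNr. Qed.
Lemma mcompBl a b c (g1 g2 : Defs.Hom A b c) (f : Defs.Hom A a b) :
  mcomp (g1 - g2) f = mcomp g1 f - mcomp g2 f.
Proof. by rewrite compDl mcompNl. Qed.

Lemma sgnE a b i (x : Defs.Hom A a b) : sgn i x = if odd i then - x else x.
Proof.
rewrite /sgn -signr_odd; case: (odd i) => /=; first by rewrite expr1 mulrN1z.
by rewrite expr0 mulr1z.
Qed.
Lemma sgnS a b i (x : Defs.Hom A a b) : sgn i.+1 x = - sgn i x.
Proof. by rewrite !sgnE /=; case: (odd i) => //=; rewrite opprK. Qed.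
Lemma sgn0 a b i : sgn i (0 : Defs.Hom A a b) = 0.
Proof. by rewrite sgnE oppr0; case: ifP. Qed.
Lemma mcomp_sgnr a b c i (g : Defs.Hom A b c) (f : Defs.Hom A a b) : mcomp g (sgn i f) = sgn i (mcomp g f).
Proof. by rewrite !sgnE; case: (odd i); rewrite ?mcompNr. Qed.
Lemma mcomp_sgnl a b c i (g : Defs.Hom A b c) (f : Defs.Hom A a b) : mcomp (sgn i g) f = sgn i (mcomp g f).
Proof. by rewrite !sgnE; case: (odd i); rewrite ?mcompNl. Qed.

Lemma mcomp_suml a b c p (F : 'I_p -> Defs.Hom A b c) (g : Defs.Hom A a b) :
  mcomp (\sum_(i < p) F i) g = \sum_(i < p) mcomp (F i) g.
Proof.
by elim: p F => [|p IH] F; rewrite ?big_ord0 ?mcomp0l // !big_ord_recr /= compDl IH.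
Qed.
Lemma mcomp_sumr a b c p (F : 'I_p -> Defs.Hom A a b) (g : Defs.Hom A b c) :
  mcomp g (\sum_(i < p) F i) = \sum_(i < p) mcomp g (F i).
Proof.
by elim: p F => [|p IH] F; rewrite ?big_ord0 ?mcomp0r // !big_ord_recr /= compDr IH.
Qed.

Lemma F1 k (a b : 'I_k.+3) : (1 <= a)%nat -> nat_of_ord b = a.+1 ->
  mcomp (del M (k:=k.+1) a) (kappa M k.+2) = - mcomp (kappa M k.+1) (del M b).
Proof.
move=> Ha Hb; rewrite /kappa mcomp_sgnr mcomp_sgnl mcompBr mcompBl.
rewrite (F1t M Ha Hb) (F1r M Ha Hb).
by rewrite !sgnE /=; case: (odd k) => //=; rewrite opprK.
Qed.

Lemma F0 n : mcomp (del M (k:=n) ord_max) (kappa M n.+1) = 0.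
Proof. by rewrite /kappa mcomp_sgnr mcompBr F0m subrr sgn0. Qed.

Lemma D1 k (c b : 'I_k.+3) : (1 <= c)%nat -> (c <= k.+1)%nat -> nat_of_ord c = b.+1 ->
  mcomp (kappa M k.+2) (sdeg M (k:=k.+1) c) = - mcomp (sdeg M b) (kappa M k.+1).
Proof.
move=> H1 H2 H3; rewrite /kappa mcomp_sgnr mcomp_sgnl mcompBr mcompBl.
rewrite (D1t M H1 H2 H3) (D1r M H1 H2 H3).
by rewrite !sgnE /=; case: (odd k) => //=; rewrite opprK.
Qed.

Lemma D0 n : mcomp (kappa M n.+1) (sdeg M (k:=n) ord0) = 0.
Proof. by rewrite /kappa mcomp_sgnl mcompBl D0m subrr sgn0. Qed.


Lemma kpS n j : kappa_pow M n j.+1 = mcomp (kappa M n) (kappa_pow M n j).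
Proof. by []. Qed.
Lemma kp0 n : kappa_pow M n 0 = idm.
Proof. by []. Qed.

Lemma face_comm n j (a b : 'I_n.+2) : (1 <= a)%nat -> nat_of_ord b = (a + j)%nat ->
  mcomp (del M a) (kappa_pow M n.+1 j) = sgn j (mcomp (kappa_pow M n j) (del M b)).
Proof.
elim: j a => [|j IH] a Ha Hb.
  have -> : a = b by apply: ord_inj; rewrite Hb addn0.
  by rewrite !kp0 compm1 comp1m sgnE.
have lb := ltn_ord b.
case: n a b Ha Hb lb IH => [|k] a b Ha Hb lb IH; first by lia.
have Ha' : (a.+1 < k.+3)%nat by lia.
set a' := Ordinal Ha'.
rewrite kpS (@Defs.compA A) (@F1 k a a') //.
rewrite mcompNl -(@Defs.compA A) (IH a') //=; last by rewrite Hb; lia.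
by rewrite mcomp_sgnr (@Defs.compA A) sgnS.
Qed.

Lemma face_zero n j (a : 'I_n.+2) : (1 <= a)%nat -> (n.+2 <= a + j)%nat ->
  mcomp (del M a) (kappa_pow M n.+1 j) = 0.
Proof.
elim: j a => [|j IH] a Ha Hb.
  by have := ltn_ord a; lia.
rewrite kpS (@Defs.compA A).
case: (eqVneq (nat_of_ord a) n.+1) => Han.
  have -> : a = ord_max by apply: ord_inj.
  by rewrite F0 mcomp0l.
have la := ltn_ord a.
case: n a Ha Hb IH Han la => [|k] a Ha Hb IH Han la; first by lia.
have Ha' : (a.+1 < k.+3)%nat by lia.
set a' := Ordinal Ha'.
rewrite (@F1 k a a') // mcompNl -(@Defs.compA A) (IH a') //=; last by lia.
by rewrite mcomp0r oppr0.
Qed.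

Lemma deg_comm n j (c b : 'I_n.+2) : (c <= n)%nat -> nat_of_ord c = (b + j)%nat ->
  mcomp (kappa_pow M n.+1 j) (sdeg M c) = sgn j (mcomp (sdeg M b) (kappa_pow M n j)).
Proof.
elim: j b => [|j IH] b Hc Hb.
  have -> : c = b by apply: ord_inj; rewrite Hb addn0.
  by rewrite !kp0 compm1 comp1m sgnE.
case: n c b Hc Hb IH => [|k] c b Hc Hb IH; first by lia.
have Hb' : (b.+1 < k.+3)%nat by lia.
set b' := Ordinal Hb'.
rewrite kpS -(@Defs.compA A) (IH b') //=; last by lia.
rewrite mcomp_sgnr (@Defs.compA A) (@D1 k b' b) //=; try lia.
rewrite mcompNl -(@Defs.compA A) sgnS kpS !sgnE; by case: (odd j); rewrite ?opprK.
Qed.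

Lemma deg_zero n j (c : 'I_n.+2) : (c <= n)%nat -> (c < j)%nat ->
  mcomp (kappa_pow M n.+1 j) (sdeg M c) = 0.
Proof.
elim: j => [|j IH] Hc Hj; first by lia.
rewrite kpS -(@Defs.compA A).
case: (ltnP c j) => Hcj.
  by rewrite IH // mcomp0r.
rewrite (@deg_comm n j c ord0) //=; last by lia.
by rewrite mcomp_sgnr (@Defs.compA A) D0 mcomp0l sgn0.
Qed.

Lemma dterm n (a : 'I_n.+2) :
  mcomp (del M a) (mcomp (kappa_pow M n.+1 n) (dd M n)) =
  sgn n (mcomp (del M a) (mcomp (kappa_pow M n.+1 n) (sdeg M (widen_ord (leqnSn n.+1) ord_max)))) +
  sgn n.+1 (mcomp (del M a) (mcomp (kappa_pow M n.+1 n) (sdeg M ord_max))).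
Proof.
rewrite /dd !mcomp_sumr !big_ord_recr /= big1 ?add0r.
  by rewrite !mcomp_sgnr.
move=> i _; have := ltn_ord i => li.
rewrite mcomp_sgnr (@deg_zero n n) /=; rewrite ?sgn0 ?mcomp0r //; lia.
Qed.

Lemma main n : dk_pi M n = kappa_pow M n n - mcomp (bnd M n) (mcomp (kappa_pow M n.+1 n) (dd M n)).
Proof.
rewrite (@Defs.compA A) /bnd mcomp_suml.
rewrite big_ord_recl big_ord_recl big1; last first.
  move=> i _; rewrite mcomp_sgnl (@face_zero n n) /=; rewrite ?sgn0 ?mcomp0l //;
  rewrite /bump /=; lia.
rewrite !compDl mcomp0l !mcomp_sgnl -!(@Defs.compA A) !dterm.
rewrite (@deg_comm n n _ ord0) //=.
rewrite !mcomp_sgnr !(@Defs.compA A) I1m (@I2m _ _ n (lift ord0 ord0)) // !comp1m.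
rewrite (@face_comm n n (lift ord0 ord0) ord_max) //=.
rewrite mcomp_sgnl -!(@Defs.compA A) I3m compm1 /dk_pi.
set K := kappa_pow M n n.
set P := mcomp _ _.
rewrite /bump /= !sgnE /=. 
case: (odd n) => /=; rewrite !addr0 ?opprK subrr subr0; first by rewrite opprD addrA subrr add0r.
by rewrite opprB addrC subrK.
Qed.

End Alg.
Theorem mainTheorem14 (A : preadditive) (M : duplicial A) (n : nat) :
  dk_pi M n = kappa_pow M n n - mcomp (bnd M n) (mcomp (kappa_pow M n.+1 n) (dd M n)).
Proof. exact: main. Qed.
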